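(* Let $\mathcal N=(G,\beta,r)$ be a potential-based flow network with $G=(V,A)$, let $T^+,T^-\subseteq V$ be disjoint, $T=T^+\cup T^-$, and let $b\in B(T)$. Let $f$ be a potential-based $b$-transshipment with corresponding node potentials $\pi\in[0,\bar\pi]^V$, where $\bar\pi>0$. Then for every $X\subseteq T$ with $b(X)\ge0$ there is a potential-based $b'$-transshipment $f'$ in $\mathcal N$, for some balanced $b'\in\mathbb{R}^V$, with corresponding potentials $\pi'\in[0,\bar\pi]^V$, such that $$\{v: b'_v>0\}\subseteq T^+\cap X,\qquad \{v:b'_v<0\}\subseteq T^-\setminus X,\qquad \sum_{v\in T^+\cap X}b'_v=b(X).$$
   Context: A potential-based flow network $\mathcal N=(G,\beta,r)$ consists of a weakly connected directed multigraph $G=(V,A)$ without loops, resistances $\beta\in\mathbb{R}^A_{>0}$ and a degree $r>0$. For a balanced vector $b\in\mathbb{R}^V$ ($\sum_v b_v=0$), a potential-based $b$-transshipment is a flow $f\in\mathbb{R}^A$ together with potentials $\pi\in\mathbb{R}^V$ such that $\pi_u-\pi_v=\beta_a\,\mathrm{sign}(f_a)|f_a|^r$ for every arc $a=(u,v)$ and $\sum_{a\in\delta^+(v)}f_a-\sum_{a\in\delta^-(v)}f_a=b_v$ for all $v\in V$ ($\delta^+(v)$, $\delta^-(v)$: arcs leaving, resp. entering, $v$). $B(T)$ is the set of balanced $b\in\mathbb{R}^V$ with $b_v\ge0$ for $v\in T^+$, $b_v\le0$ for $v\in T^-$, and $b_v=0$ for $v\notin T$. For $X\subseteq T$, $b(X)=\sum_{v\in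 X}b_v$. *)

(* Defs.v *)
From HB Require Import structures.
From mathcomp Require Import all_boot all_order all_algebra.
From mathcomp Require Import reals exp.
Set Implicit Arguments. Unset Strict Implicit. Unset Printing Implicit Defensive.
Import Order.TTheory GRing.Theory Num.Theory.
Local Open Scope ring_scope.

Section Net.
Variables (R : realType) (V A : finType) (tl hd : A -> V).

Definition und_adj : rel V :=
  fun x y => [exists a : A, ((tl a == x) && (hd a == y)) || ((tl a == y) && (hd a == x))].
Definition weakly_connected : Prop := forall u v : V, connect und_adj u v.
Definition loopless : Prop := forall a : A, tl a != hd a.

Definition pb_network (beta : A -> R) (r : R) : Prop :=
  [/\ weakly_connected, loopless, (forall a, 0 < beta a) & 0 < r].

Definition balanced (b : V -> R) : Prop := \sum_(v : V) b v = 0.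

Definition netout (f : A -> R) (v : V) : R :=
  \sum_(a : A | tl a == v) f a - \sum_(a : A | hd a == v) f a.

Definition pb_transshipment (beta : A -> R) (r : R) (b : V -> R)
    (f : A -> R) (pi : V -> R) : Prop :=
  (forall a : A, pi (tl a) - pi (hd a) = beta a * Num.sg (f a) * powR `|f a| r) /\
  (forall v : V, netout f v = b v).

Definition in_BT (Tp Tm : {set V}) (b : V -> R) : Prop :=
  [/\ balanced b,
      (forall v, v \in Tp -> 0 <= b v),
      (forall v, v \in Tm -> b v <= 0) &
      (forall v, v \notin Tp :|: Tm -> b v = 0)].

Definition bsum (b : V -> R) (X : {set V}) : R := \sum_(v in X) b v.

End Net.

(* Main.v *)
Require Import Defs.
From HB Require Import structures.
From mathcomp Require Import classical_sets.
From mathcomp Require Import all_boot all_order all_algebra.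
From mathcomp Require Import reals exp lra.
Import Order.TTheory GRing.Theory Num.Theory.
Local Open Scope ring_scope.

(* Proof strategy: a Perron-type construction of a potential psi, equal to 1 on
   S = Tp :&: X and 0 on K = Tm :\: X and balanced elsewhere; a cut comparison
   with the given flow; and scaling of potentials. *)

Section GG.
Variables (R : realType) (be r : R).
Hypotheses (hb : 0 < be) (hr : 0 < r).

Definition GG (x : R) := be * Num.sg x * powR `|x| r.
Definition gg (y : R) := Num.sg y * powR (`|y| / be) r^-1.

Lemma powR_invK (x : R) : 0 <= x -> powR (powR x r) r^-1 = x.
Proof. by move=> x0; rewrite -powRrM mulfV ?gt_eqF // powRr1. Qed.
Lemma powR_Kinv (x : R) : 0 <= x -> powR (powR x r^-1) r = x.
Proof. by move=> x0; rewrite -powRrM mulVf ?gt_eqF // powRr1. Qed.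

Lemma sg_powR (x s : R) : 0 < s -> Num.sg x * powR `|x| s = 0 -> x = 0.
Proof.
move=> s0 /eqP; rewrite mulf_eq0 sgr_eq0 powR_eq0 normr_eq0 (gt_eqF s0) andbT orbb.
by move/eqP.
Qed.

Lemma ggK x : gg (GG x) = x.
Proof.
rewrite /gg /GG.
have [->|x0] := eqVneq x 0; first by rewrite sgr0 !mulr0 mul0r sgr0 mul0r.
have p0 : 0 < powR `|x| r by rewrite powR_gt0 // normr_gt0.
rewrite -mulrA sgrM gtr0_sg // mul1r sgrM (gtr0_sg p0) mulr1 sgr_id.
rewrite normrM normrM gtr0_norm // normr_sg x0 mul1r.
rewrite (ger0_norm (ltW p0)) mulrAC mulfV ?gt_eqF // mul1r powR_invK //.
by rewrite mulr_sg_norm.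
Qed.

Lemma GGK y : GG (gg y) = y.
Proof.
rewrite /gg /GG.
have [->|y0] := eqVneq y 0; first by rewrite sgr0 !mul0r !(sgr0, mulr0, mul0r).
have p0 : 0 < powR (`|y| / be) r^-1 by rewrite powR_gt0 // divr_gt0 ?normr_gt0.
rewrite sgrM sgr_id (gtr0_sg p0) mulr1 normrM normr_sg y0 mul1r.
rewrite (ger0_norm (ltW p0)) powR_Kinv ?divr_ge0 ?normr_ge0 ?ltW //.
by rewrite mulrC mulrA divfK ?gt_eqF // mulrC mulr_sg_norm.
Qed.

Lemma s_lt (x y : R) : x < y -> Num.sg x * powR `|x| r < Num.sg y * powR `|y| r.
Proof.
move=> xy.
have mono : forall u w : R, 0 <= u -> u < w -> powR u r < powR w r.
  move=> u w u0 uw; apply: gt0_ltr_powR => //; rewrite ?nnegrE //.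
  exact: (le_trans u0 (ltW uw)).
have [x0|x0] := leP 0 x.
  have y0 : 0 < y by apply: le_lt_trans xy.
  rewrite (gtr0_sg y0) mul1r ger0_norm // gtr0_norm //.
  have [->|xn0] := eqVneq x 0; first by rewrite sgr0 mul0r powR_gt0.
  have x0' : 0 < x by rewrite lt_neqAle eq_sym xn0.
  by rewrite gtr0_sg // mul1r mono.
rewrite (ltr0_sg x0) mulN1r.
have [y0|y0] := leP 0 y.
  apply: (@lt_le_trans _ _ 0); first by rewrite oppr_lt0 powR_gt0 // normr_gt0 ltr0_neq0.
  have [->|yn0] := eqVneq y 0; first by rewrite sgr0 mul0r.
  by rewrite gtr0_sg ?mul1r ?powR_ge0 // lt_neqAle eq_sym yn0.
rewrite (ltr0_sg y0) mulN1r ltrN2 !ltr0_norm // mono //.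
  by rewrite oppr_ge0 ltW.
by rewrite ltrN2.
Qed.

Lemma GG_lt x y : x < y -> GG x < GG y.
Proof. by move=> xy; rewrite /GG -!mulrA ltr_pM2l // s_lt. Qed.

Lemma GG_le x y : x <= y -> GG x <= GG y.
Proof. by rewrite le_eqVlt => /orP [/eqP ->//|/GG_lt/ltW]. Qed.

Lemma gg_le x y : x <= y -> gg x <= gg y.
Proof.
move=> xy; rewrite leNgt; apply/negP => /GG_lt; rewrite !GGK => /(le_lt_trans xy).
by rewrite ltxx.
Qed.

Lemma gg0 : gg 0 = 0.
Proof. by rewrite /gg sgr0 mul0r. Qed.

Lemma ggZ (L y : R) : 0 < L -> gg (L * y) = powR L r^-1 * gg y.
Proof.
move=> L0; rewrite /gg sgrM gtr0_sg // mul1r normrM gtr0_norm // -mulrA powRM.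
- by rewrite mulrCA.
- exact: ltW.
- by rewrite divr_ge0 ?normr_ge0 ?(ltW hb).
Qed.

Definition contat (k : R -> R) (x0 : R) := forall e, 0 < e ->
  exists2 d, 0 < d & forall x, `|x - x0| < d -> `|k x - k x0| < e.

Lemma gg_cont d : contat gg d.
Proof.
move=> e e0.
pose d1 := d - GG (gg d - e). pose d2 := GG (gg d + e) - d.
have d10 : 0 < d1.
  have := @GG_lt (gg d - e) (gg d); rewrite GGK gtrBl => /(_ e0).
  by rewrite /d1 subr_gt0.
have d20 : 0 < d2.
  have := @GG_lt (gg d) (gg d + e); rewrite GGK ltrDl => /(_ e0).
  by rewrite /d2 subr_gt0.
exists (Num.min d1 d2); first by rewrite lt_min d10 d20.
move=> x; rewrite lt_min => /andP [h1 h2].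
move: h1 h2; rewrite !ltr_norml => /andP [h1 _] /andP [_ h2].
apply/andP; split.
  rewrite ltrBrDl ltNge; apply/negP => hx.
  have := GG_le _ _ hx; rewrite GGK => hh.
  move: h1; rewrite /d1 ltrBrDl.
  by rewrite opprB addrA addrC addrA [-d + _]addrC subrr add0r ltNge hh.
rewrite ltrBlDl ltNge; apply/negP => hx.
have := GG_le _ _ hx; rewrite GGK => hh.
move: h2; rewrite /d2 ltrBlDl.
by rewrite addrC subrK ltNge hh.
Qed.

End GG.
Arguments gg {R}. Arguments GG {R}. Arguments contat {R}.
Arguments gg_le {R be r}. Arguments gg_cont {R be r}. Arguments ggK {R be r}. Arguments GGK {R be r}. Arguments ggZ {R be r}. Arguments gg0 {R be r}. Arguments GG_le {R be r}.


Section Net2.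
Variables (R : realType) (V A : finType) (tl hd : A -> V) (beta : A -> R) (r : R).
Hypotheses (hb : forall a, 0 < beta a) (hr : 0 < r).

Definition fl (p : V -> R) (a : A) := gg (beta a) r (p (tl a) - p (hd a)).
Definition cf (a : A) (v : V) : R := (tl a == v)%:R - (hd a == v)%:R.

Lemma netoutE (f : A -> R) v : netout tl hd f v = \sum_a f a * cf a v.
Proof.
rewrite /netout (big_mkcond (fun a => tl a == v)) (big_mkcond (fun a => hd a == v)) -sumrB.
apply: eq_bigr => a _; rewrite /cf.
by case: (tl a == v); case: (hd a == v); rewrite /= ?subrr ?mulr0 ?subr0 ?sub0r ?mulr1 ?mulrN1 ?mulrN ?mulr0.
Qed.

Lemma netout_mono p q v : (forall w, q w - p w <= q v - p v) ->
  netout tl hd (fl p) v <= netout tl hd (fl q) v.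
Proof.
move=> H; rewrite !netoutE; apply: ler_sum => a _; rewrite /cf /fl.
case: (eqVneq (tl a) v) => [ht|ht]; case: (eqVneq (hd a) v) => [hh|hh];
  rewrite /= ?subrr ?mulr0 ?subr0 ?sub0r ?mulr1 ?mulrN1 ?mulrN ?mulr0 //.
- apply: (gg_le (hb a) hr); rewrite ht; have := H (hd a); lra.
- rewrite lerN2; apply: (gg_le (hb a) hr); rewrite hh; have := H (tl a); lra.
Qed.

Lemma sum_ind (U : {set V}) x : \sum_(w in U) ((x == w)%:R : R) = (x \in U)%:R.
Proof.
case: (boolP (x \in U)) => xU.
  rewrite (bigD1 x) //= eqxx big1 ?addr0 // => w /andP [_ /negbTE]; rewrite eq_sym => ->.
  by [].
by rewrite big1 // => w wU; case: eqP => // xw; rewrite xw wU in xU.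
Qed.

Lemma netout_sumU (f : A -> R) (U : {set V}) : \sum_(w in U) netout tl hd f w =
  \sum_a f a * (((tl a \in U)%:R : R) - (hd a \in U)%:R).
Proof.
under eq_bigr do rewrite netoutE.
rewrite exchange_big; apply: eq_bigr => a _; rewrite -mulr_sumr; congr (_ * _).
by rewrite /cf sumrB !sum_ind.
Qed.

Lemma netout_sum0 (f : A -> R) : \sum_v netout tl hd f v = 0.
Proof.
have H := netout_sumU f [set: V].
have E : \sum_v netout tl hd f v = \sum_(w in [set: V]) netout tl hd f w.
  by apply: eq_bigl => w; rewrite in_setT.
by rewrite E H big1 // => a _; rewrite !in_setT subrr mulr0.
Qed.

Lemma fl_const (c : R) a : fl (fun=> c) a = 0.
Proof. by rewrite /fl subrr gg0. Qed.

Lemma netout0 v : netout tl hd (fun _ : A => (0:R)) v = 0.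
Proof. by rewrite netoutE big1 // => a _; rewrite mul0r. Qed.

Lemma netout_const (c : R) v : netout tl hd (fl (fun=> c)) v = 0.
Proof. by rewrite netoutE big1 // => a _; rewrite fl_const mul0r. Qed.

Lemma contat_cst (c x0 : R) : contat (fun=> c) x0.
Proof. by move=> e e0; exists 1 => // x _; rewrite subrr normr0. Qed.

Lemma contat_sumseq (I : Type) (s : seq I) (k : I -> R -> R) x0 :
  (forall i, contat (k i) x0) -> contat (fun x => \sum_(i <- s) k i x) x0.
Proof.
move=> H; elim: s => [|i s IH].
  by move=> e e0; exists 1 => // x _; rewrite !big_nil subrr normr0.
move=> e e0.
have e2 : 0 < e / 2 by rewrite divr_gt0.
have [d1 d10 h1] := H i _ e2; have [d2 d20 h2] := IH _ e2.
exists (Num.min d1 d2); first by rewrite lt_min d10 d20.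
move=> x; rewrite lt_min => /andP [x1 x2]; rewrite !big_cons.
have := h1 _ x1; have := h2 _ x2.
set u := k i x - k i x0; set w := \sum_(j <- s) k j x - \sum_(j <- s) k j x0.
have -> : k i x + \sum_(j <- s) k j x - (k i x0 + \sum_(j <- s) k j x0) = u + w.
  by rewrite /u /w; lra.
move=> hw hu; apply: (le_lt_trans (ler_normD _ _)).
have -> : e = e / 2 + e / 2 by lra.
by rewrite ltrD.
Qed.

Lemma contat_ext (k1 k2 : R -> R) x0 : (forall x, k1 x = k2 x) ->
  contat k1 x0 -> contat k2 x0.
Proof.
move=> E H e e0; have [d d0 Hd] := H e e0; exists d => // x; rewrite -!E; exact: Hd.
Qed.

Definition upd (p : V -> R) v x := fun w => if w == v then x else p w.

Lemma contat_h p v : contat (fun x => netout tl hd (fl (upd p v x)) v) (p v).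
Proof.
have E : forall x, netout tl hd (fl (upd p v x)) v =
    \sum_(a <- index_enum A) fl (upd p v x) a * cf a v.
  by move=> x; rewrite netoutE.
have H : forall a, contat (fun x => fl (upd p v x) a * cf a v) (p v); last first.
  move=> e e0; have [d d0 hd'] := (@contat_sumseq _ (index_enum A) _ _ H) _ e0.
  by exists d => // x /hd'; rewrite !E.
move=> a; rewrite /cf /fl /upd.
case: (eqVneq (tl a) v) => [ht|ht]; case: (eqVneq (hd a) v) => [hh|hh].
- apply: (@contat_ext (fun=> 0)); last exact: contat_cst.
  by move=> x; rewrite !subrr mulr0.
- apply: (@contat_ext (fun x => gg (beta a) r (x - p (hd a)))).
    by move=> x; rewrite mulr1n mulr0n subr0 mulr1.
  move=> e1 e10; have [d d0 H] := gg_cont (hb a) hr (p v - p (hd a)) _ e10.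
  exists d => // x hx; apply: H.
  have -> : x - p (hd a) - (p v - p (hd a)) = x - p v by lra.
  by [].
- apply: (@contat_ext (fun x => - gg (beta a) r (p (tl a) - x))).
    by move=> x; rewrite mulr1n mulr0n sub0r mulrN1.
  move=> e1 e10; have [d d0 H] := gg_cont (hb a) hr (p (tl a) - p v) _ e10.
  exists d => // x hx; rewrite -opprD normrN; apply: H.
  have -> : p (tl a) - x - (p (tl a) - p v) = - (x - p v) by lra.
  by rewrite normrN.
- apply: (@contat_ext (fun=> 0)); last exact: contat_cst.
  by move=> x; rewrite !subrr mulr0.
Qed.

End Net2.
Arguments upd {R V}. Arguments fl {R V A}.


Section Perron.
Variables (R : realType) (V A : finType) (tl hd : A -> V) (beta : A -> R) (r : R).
Hypotheses (hb : forall a, 0 < beta a) (hr : 0 < r).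
Variables (S K : {set V}).
Hypothesis hSK : forall w, w \in K -> w \notin S.

Local Notation flx := (@fl R V A tl hd beta r).
Local Notation netout := (netout tl hd).

Lemma netout_ext (f1 f2 : A -> R) v : f1 =1 f2 -> netout f1 v = netout f2 v.
Proof. by move=> E; rewrite /netout; congr (_ - _); apply: eq_bigr => a _; rewrite E. Qed.

Lemma fl_ext (p q : V -> R) : p =1 q -> flx p =1 flx q.
Proof. by move=> E a; rewrite /fl !E. Qed.

Lemma upd_id (p : V -> R) v : upd p v (p v) =1 p.
Proof. by move=> w; rewrite /upd; case: eqP => // ->. Qed.

Definition Sub (p : V -> R) : Prop :=
  [/\ forall w, 0 <= p w <= 1, forall w, w \in S -> p w = 1,
      forall w, w \in K -> p w = 0 &
      forall w, w \notin S -> w \notin K -> netout (flx p) w <= 0].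

Definition Ew w : set R := fun x => exists2 p, Sub p & x = p w.
Definition psi w := sup (Ew w).
Definition p0 (w : V) : R := if w \in S then 1 else 0.

Lemma Sub_p0 : Sub p0.
Proof.
split.
- by move=> w; rewrite /p0; case: (w \in S); rewrite ?lexx ?ler01.
- by move=> w wS; rewrite /p0 wS.
- by move=> w /hSK /negbTE; rewrite /p0 => ->.
- move=> w wS wK; rewrite -(@netout_const R V A tl hd beta r 0 w).
  apply: (@netout_mono R V A tl hd beta r hb hr) => u; rewrite /p0 (negbTE wS) !sub0r lerN2.
  by case: (u \in S); rewrite ?ler01.
Qed.

Lemma hasE w : has_sup (Ew w).
Proof.
split; first by exists (p0 w), p0; [exact: Sub_p0|].
by exists 1 => x [p [h _ _ _] ->]; case/andP: (h w).
Qed.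

Lemma psi_ub p w : Sub p -> p w <= psi w.
Proof. by move=> sp; apply: sup_upper_bound (hasE w) _ _; exists p. Qed.

Lemma psi_le1 w : psi w <= 1.
Proof. by apply: ge_sup; [case: (hasE w)|move=> x [p [h _ _ _] ->]; case/andP: (h w)]. Qed.

Lemma psi_ge0 w : 0 <= psi w.
Proof.
apply: le_trans (psi_ub p0 w Sub_p0); rewrite /p0; by case: (w \in S); rewrite ?ler01.
Qed.

Lemma psi_S w : w \in S -> psi w = 1.
Proof.
move=> wS; apply/le_anti; rewrite psi_le1 /=.
by have := psi_ub p0 w Sub_p0; rewrite /p0 wS.
Qed.

Lemma psi_K w : w \in K -> psi w = 0.
Proof.
move=> wK; apply/le_anti; rewrite psi_ge0 andbT.
by apply: ge_sup; [case: (hasE w)|move=> x [p [_ _ h _] ->]; rewrite h].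
Qed.

Lemma step1 v : v \notin S -> v \notin K -> netout (flx psi) v <= 0.
Proof.
move=> vS vK; rewrite leNgt; apply/negP => H.
have [d d0 Hd] := @contat_h R V A tl hd beta r hb hr psi v _ H.
have [e [p sp ->] he] := sup_adherent d0 (hasE v).
have pv := psi_ub _ v sp.
have hx : `|p v - psi v| < d.
  by rewrite ler0_norm ?subr_le0 // opprB ltrBlDl -ltrBlDr.
have := Hd _ hx.
rewrite (@netout_ext _ _ v (@fl_ext _ _ (upd_id psi v))) => Hh.
have hpos : 0 < netout (flx (upd psi v (p v))) v.
  move: Hh; rewrite ltr_norml => /andP [h _]; move: h; lra.
have : netout (flx (upd psi v (p v))) v <= netout (flx p) v.
  apply: (@netout_mono R V A tl hd beta r hb hr) => w; rewrite /upd eqxx subrr.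
  case: eqP => [->|_]; rewrite ?subrr // subr_le0 (psi_ub _ _ sp).
1: done. case: sp => _ _ _ /(_ v vS vK) h1 h2.
by have := lt_le_trans hpos (le_trans h2 h1); rewrite ltxx.
Qed.

Lemma step2 v : v \notin S -> v \notin K -> 0 <= netout (flx psi) v.
Proof.
move=> vS vK; rewrite leNgt; apply/negP => H.
have v1 : psi v < 1.
  rewrite lt_neqAle psi_le1 andbT; apply/negP => /eqP E.
  have : netout (flx (fun=> 1)) v <= netout (flx psi) v.
    apply: (@netout_mono R V A tl hd beta r hb hr) => w; rewrite E; have := psi_le1 w; lra.
  by rewrite netout_const leNgt H.
have Hn : 0 < - netout (flx psi) v by rewrite oppr_gt0.
have [d d0 Hd] := @contat_h R V A tl hd beta r hb hr psi v _ Hn.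
pose x := Num.min (psi v + d / 2) 1.
have xgt : psi v < x by rewrite /x lt_min v1 andbT ltrDl divr_gt0.
have xle : x <= psi v + d / 2 by rewrite /x ge_min lexx.
have hx : `|x - psi v| < d.
  rewrite gtr0_norm ?subr_gt0 //; move: xle; lra.
have := Hd _ hx.
rewrite (@netout_ext _ _ v (@fl_ext _ _ (upd_id psi v))) => Hh.
have hneg : netout (flx (upd psi v x)) v < 0.
  move: Hh; rewrite ltr_norml => /andP [_ h]; move: h; lra.
have sp : Sub (upd psi v x).
  split.
  - move=> w; rewrite /upd; case: eqP => _; last by rewrite psi_ge0 psi_le1.
    rewrite ge_min lexx orbT andbT; apply: le_trans (psi_ge0 v) (ltW xgt).
  - move=> w wS; rewrite /upd; case: eqP => [E|_]; last exact: psi_S.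
    by rewrite -E wS in vS.
  - move=> w wK; rewrite /upd; case: eqP => [E|_]; last exact: psi_K.
    by rewrite -E wK in vK.
  - move=> w wS wK; case: (eqVneq w v) => [->|wv]; first exact: ltW.
    apply: le_trans (step1 _ wS wK).
    apply: (@netout_mono R V A tl hd beta r hb hr) => u; rewrite /upd (negbTE wv) subrr.
    by case: eqP => [->|_]; rewrite ?subrr // subr_le0 ltW.
have := psi_ub _ v sp; rewrite /upd eqxx leNgt xgt.
by [].
Qed.

Lemma psi_harm v : v \notin S -> v \notin K -> netout (flx psi) v = 0.
Proof. by move=> vS vK; apply/le_anti; rewrite step1 // step2. Qed.

Lemma psi_Spos v : v \in S -> 0 <= netout (flx psi) v.
Proof.
move=> vS; rewrite -(@netout_const R V A tl hd beta r 0 v).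
apply: (@netout_mono R V A tl hd beta r hb hr) => w /=; rewrite (psi_S _ vS); have := psi_le1 w; lra.
Qed.

Lemma psi_Kneg v : v \in K -> netout (flx psi) v <= 0.
Proof.
move=> vK; rewrite -(@netout_const R V A tl hd beta r 0 v).
apply: (@netout_mono R V A tl hd beta r hb hr) => w /=; rewrite (psi_K _ vK); have := psi_ge0 w; lra.
Qed.

End Perron.


Lemma scale_netout (R : realType) (V A : finType) (tl hd : A -> V) (beta : A -> R) (r : R)
  (hb : forall a, 0 < beta a) (p : V -> R) (L : R) v : 0 < L ->
  netout tl hd (fl tl hd beta r (fun w => L * p w)) v =
  powR L r^-1 * netout tl hd (fl tl hd beta r p) v.
Proof.
move=> L0; rewrite !netoutE mulr_sumr; apply: eq_bigr => a _.
by rewrite /fl -mulrBr (ggZ (hb a)) // mulrA.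
Qed.

Theorem theorem4 (R : realType) (V A : finType) (tl hd : A -> V)
    (beta : A -> R) (r : R) (Tp Tm : {set V}) (b : V -> R)
    (f : A -> R) (pi : V -> R) (pibar : R) :
  pb_network tl hd beta r ->
  [disjoint Tp & Tm] ->
  in_BT Tp Tm b ->
  0 < pibar ->
  pb_transshipment tl hd beta r b f pi ->
  (forall v, 0 <= pi v <= pibar) ->
  forall X : {set V}, X \subset Tp :|: Tm -> 0 <= bsum b X ->
  exists (b' : V -> R) (f' : A -> R) (pi' : V -> R),
    [/\ balanced b',
        pb_transshipment tl hd beta r b' f' pi' /\
        (forall v, 0 <= pi' v <= pibar),
        (forall v, 0 < b' v -> v \in Tp :&: X),
        (forall v, b' v < 0 -> v \in Tm :\: X) &
        bsum b' (Tp :&: X) = bsum b X].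
Proof.
move=> [_ _ hb hr] hdisj [bal bTp bTm bout] pib0 [hpot hnet] pirange X hX.
rewrite le_eqVlt => /orP [/eqP bX0|bXpos].
  exists (fun=> 0), (fun=> 0), (fun=> 0); split.
  - by rewrite /balanced big1.
  - split; last by move=> v; rewrite lexx ltW.
    split; first by move=> a; rewrite subrr sgr0 mulr0 mul0r.
    by move=> v; rewrite /netout !big1 ?subr0.
  - by move=> v; rewrite ltxx.
  - by move=> v; rewrite ltxx.
  - by rewrite /bsum big1.
set bX := bsum b X in bXpos *.
pose S := Tp :&: X. pose K := Tm :\: X.
have dTpm : forall w, w \in Tp -> w \in Tm -> False.
  by move=> w h1 h2; move: hdisj => /disjointFr /(_ h1); rewrite h2.
have hSK : forall w, w \in K -> w \notin S.
  move=> w; rewrite !inE => /andP [_ wTm]; apply/negP => /andP [wTp _].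
  exact: dTpm wTp wTm.
pose ps := psi R V A tl hd beta r S K.
pose bp := fun v => netout tl hd (fl tl hd beta r ps) v.
have pS : forall w, w \in S -> ps w = 1 := @psi_S R V A tl hd beta r hb hr S K hSK.
have pK : forall w, w \in K -> ps w = 0 := @psi_K R V A tl hd beta r hb hr S K hSK.
have p1 : forall w, ps w <= 1 := @psi_le1 R V A tl hd beta r hb hr S K hSK.
have p0 : forall w, 0 <= ps w := @psi_ge0 R V A tl hd beta r hb hr S K hSK.
have pH : forall v, v \notin S -> v \notin K -> bp v = 0 :=
  @psi_harm R V A tl hd beta r hb hr S K hSK.
have pSp : forall v, v \in S -> 0 <= bp v := @psi_Spos R V A tl hd beta r hb hr S K hSK.
have pKn : forall v, v \in K -> bp v <= 0 := @psi_Kneg R V A tl hd beta r hb hr S K hSK.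
pose F := \sum_(w in S) bp w.
have fE : forall a, f a = gg (beta a) r (pi (tl a) - pi (hd a)).
  by move=> a; rewrite hpot; exact: (esym (ggK (hb a) hr (f a))).
have comp : forall L, pibar < L -> bX <= powR L r^-1 * F.
  move=> L hL.
  have L0 : 0 < L by apply: lt_trans hL.
  pose U := [set w | pi w < L * ps w].
  have SU : forall w, w \in S -> w \in U.
    move=> w wS; rewrite inE pS // mulr1.
    by case/andP: (pirange w) => _ h; apply: le_lt_trans hL.
  have KU : forall w, w \in K -> w \notin U.
    by move=> w wK; rewrite inE pK // mulr0 -leNgt; case/andP: (pirange w).
  have i1 : bX <= bsum b U.
    rewrite /bX /bsum (big_mkcond (fun v => v \in X)) (big_mkcond (fun v => v \in U)).
    apply: ler_sum => v _.
    case: (boolP (v \in Tp)) => vTp.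
      have bv := bTp v vTp.
      case: (boolP (v \in X)) => vX.
        by rewrite SU // inE vTp vX.
      by case: (v \in U).
    case: (boolP (v \in Tm)) => vTm.
      have bv := bTm v vTm.
      case: (boolP (v \in X)) => vX.
        by case: (v \in U).
      by rewrite (negbTE (KU v _)) // inE vTm vX.
    rewrite bout; first by case: (v \in X); case: (v \in U).
    by rewrite !inE negb_or vTp vTm.
  apply: (le_trans i1).
  have -> : bsum b U = \sum_(w in U) netout tl hd f w.
    by apply: eq_bigr => w _; rewrite hnet.
  rewrite netout_sumU.
  have -> : F = \sum_(w in U) bp w.
    rewrite /F (big_mkcond (fun w => w \in S)) (big_mkcond (fun w => w \in U)).
    apply: eq_bigr => w _.
    case: (boolP (w \in S)) => wS; first by rewrite SU.
    case: (boolP (w \in K)) => wK; first by rewrite (negbTE (KU _ wK)).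
    by rewrite pH //; case: (_ \in _).
  rewrite mulr_sumr.
  have -> : \sum_(i in U) powR L r^-1 * bp i =
      \sum_(w in U) netout tl hd (fl tl hd beta r (fun w => L * ps w)) w.
    by apply: eq_bigr => w _; rewrite scale_netout.
  rewrite netout_sumU; apply: ler_sum => a _.
  rewrite fE /fl.
  case: (boolP (tl a \in U)); case: (boolP (hd a \in U)); rewrite /= ?subrr ?mulr0 //.
  - rewrite !inE -leNgt => hh ht.
    rewrite mulr0n mulr1n subr0 !mulr1; apply: (gg_le (hb a) hr); lra.
  - rewrite !inE -leNgt => hh ht.
    rewrite mulr0n mulr1n sub0r !mulrN1 lerN2; apply: (gg_le (hb a) hr); lra.
have powge : forall L, 0 <= powR L r^-1 by move=> L; apply: powR_ge0.
have Fpos : 0 < F.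
  rewrite ltNge; apply/negP => hF.
  have h : bX <= powR (pibar + 1) r^-1 * F by apply: comp; lra.
  have : powR (pibar + 1) r^-1 * F <= 0 by rewrite mulr_ge0_le0.
  move=> h2; have := le_trans h h2; rewrite leNgt bXpos.
  by [].
pose L0 := powR (bX / F) r.
have qpos : 0 < bX / F by rewrite divr_gt0.
have L0pos : 0 < L0 by rewrite powR_gt0.
have L0K : powR L0 r^-1 = bX / F by rewrite powR_invK // ltW.
have L0le : L0 <= pibar.
  rewrite leNgt; apply/negP => hL.
  pose L := (pibar + L0) / 2.
  have h1 : pibar < L by rewrite /L; lra.
  have h2 : L < L0 by rewrite /L; lra.
  have := comp L h1.
  have : powR L r^-1 < powR L0 r^-1.
    apply: gt0_ltr_powR; rewrite ?invr_gt0 ?nnegrE //; lra.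
  rewrite L0K => hlt hle.
  have h3 : powR L r^-1 * F < bX / F * F by rewrite ltr_pM2r.
  have := le_lt_trans hle h3.
  by rewrite divfK ?gt_eqF // ltxx.
pose pi' := fun w => L0 * ps w.
pose f' := fl tl hd beta r pi'.
have bE : forall v, netout tl hd f' v = powR L0 r^-1 * bp v.
  by move=> v; rewrite /f' /pi' scale_netout.
have cpos : 0 < powR L0 r^-1 by rewrite powR_gt0.
exists (netout tl hd f'), f', pi'; split.
- exact: netout_sum0.
- split; last first.
    move=> v; rewrite /pi' mulr_ge0 ?(ltW L0pos) ?p0 //=.
    by apply: le_trans L0le; rewrite ler_piMr ?(ltW L0pos).
  split => // a; rewrite /f' /fl; exact: (esym (GGK (hb a) hr _)).
- move=> v; rewrite bE => hv.
  case: (boolP (v \in S)) => // vS.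
  case: (boolP (v \in K)) => vK.
    by have := pKn v vK; rewrite -(pmulr_rle0 _ cpos) leNgt hv.
  by move: hv; rewrite pH // mulr0 ltxx.
- move=> v; rewrite bE => hv.
  case: (boolP (v \in K)) => // vK.
  case: (boolP (v \in S)) => vS.
    by have := pSp v vS; rewrite -(pmulr_rge0 _ cpos) leNgt hv.
  by move: hv; rewrite pH // mulr0 ltxx.
- rewrite /bsum -/S.
  under eq_bigr do rewrite bE.
  by rewrite -mulr_sumr -/F L0K divfK ?gt_eqF.
Qed.
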